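(* Let $K$ be a finite field and $|\cdot|:K\to R$ a multiplicative generalized seminorm. Then $|\cdot|$ is multiplicatively equivalent to the trivial seminorm $|\cdot|_0:K\to\{0,1\}$, given by $|0|_0=0$ and $|x|_0=1$ for $x\neq0$.
   Context: A halo is a commutative unital semiring with a partial order compatible with $+$ and $\cdot$; an aura is a halo whose semiring is a semifield; positive means $0<1$. A generalized seminorm on a ring $A$ is a map $|\cdot|:A\to R$ into a positive totally ordered aura with $|0|=0,|1|=1$, $|a+b|\le|a|+|b|$, $|ab|\le|a||b|$; multiplicative if $|ab|=|a||b|$. The target $\{0,1\}$ is the halo with $0<1$, $1+1=1$ and usual multiplication. Two seminorms $|\cdot|_1,|\cdot|_2$ on $A$ are multiplicatively equivalent if for all $a,b,c\in A$: $|a|_1|c|_1\le|b|_1\iff|a|_2|c|_2\le|b|_2$. *)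

(* Defs.v *)
From HB Require Import structures.
From mathcomp Require Import all_boot all_order all_algebra all_field.
Set Implicit Arguments. Unset Strict Implicit. Unset Printing Implicit Defensive.
Import GRing.Theory.

Record tot_aura := TotAura {
  car :> Type;
  azero : car;
  aone : car;
  aadd : car -> car -> car;
  amul : car -> car -> car;
  ale : car -> car -> Prop;
  aaddA : forall x y z, aadd x (aadd y z) = aadd (aadd x y) z;
  aaddC : forall x y, aadd x y = aadd y x;
  aadd0 : forall x, aadd azero x = x;
  amulA : forall x y z, amul x (amul y z) = amul (amul x y) z;
  amulC : forall x y, amul x y = amul y x;
  amul1 : forall x, amul aone x = x;
  amulD : forall x y z, amul x (aadd y z) = aadd (amul x y) (amul x z);
  amul0 : forall x, amul azero x = azero;
  ainv : forall x, x <> azero -> exists y, amul x y = aone;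
  ale_refl : forall x, ale x x;
  ale_anti : forall x y, ale x y -> ale y x -> x = y;
  ale_trans : forall x y z, ale x y -> ale y z -> ale x z;
  ale_total : forall x y, ale x y \/ ale y x;
  ale_add : forall x y z, ale x y -> ale (aadd x z) (aadd y z);
  ale_mul : forall x y z, ale x y -> ale (amul x z) (amul y z);
  apos : ale azero aone /\ azero <> aone
}.

Definition bool_aura : tot_aura.
Proof.
refine (@TotAura bool false true orb andb (fun a b => a ==> b) _ _ _ _ _ _ _ _ _ _ _ _ _ _ _ _).
all: try by repeat case.
all: try by (case=> // _; exists true).
all: try by (move=> [] [] //=).
all: try by (move=> [] [] [] //=).
all: by move=> [] []; auto.
Defined.

Definition mult_gen_seminorm (A : pzRingType) (R : tot_aura) (v : A -> R) : Prop :=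
  [/\ v 0%R = azero R, v 1%R = aone R,
      forall a b, ale (v (a + b)%R) (aadd (v a) (v b)),
      forall a b, ale (v (a * b)%R) (amul (v a) (v b))
    & forall a b, v (a * b)%R = amul (v a) (v b)].

Definition mult_equiv (A : pzRingType) (R1 R2 : tot_aura)
  (v1 : A -> R1) (v2 : A -> R2) : Prop :=
  forall a b c : A,
    ale (amul (v1 a) (v1 c)) (v1 b) <-> ale (amul (v2 a) (v2 c)) (v2 b).

Definition triv_seminorm (K : fieldType) (x : K) : bool_aura := x != 0%R.

(* Main.v *)
Require Import Defs.
From mathcomp Require Import all_boot all_order all_algebra all_field.

Section Aux.
Variable R : tot_aura.
Fixpoint apow (a : R) (n : nat) : R :=
  match n with O => aone R | S k => amul a (apow a k) end.

Lemma mul1r' (x : R) : amul x (aone R) = x.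
Proof. by rewrite amulC amul1. Qed.

Lemma pow_le1 (a : R) k : ale a (aone R) -> ale (apow a k.+1) a.
Proof.
move=> h; elim: k => [|k IH] /=; first by rewrite mul1r'; apply: ale_refl.
have h1 := ale_mul a IH. rewrite /= in h1.
have h2 : ale (amul a a) a by rewrite -{3}(amul1 a); apply: ale_mul.
apply: ale_trans h2. by rewrite amulC.
Qed.

Lemma pow_ge1 (a : R) k : ale (aone R) a -> ale a (apow a k.+1).
Proof.
move=> h; elim: k => [|k IH] /=; first by rewrite mul1r'; apply: ale_refl.
have h1 := ale_mul a IH. rewrite /= in h1.
have h2 : ale a (amul a a) by rewrite -{1}(amul1 a); apply: ale_mul.
apply: ale_trans h2 _. by rewrite amulC.
Qed.

Lemma pow1 (a : R) k : apow a k.+1 = aone R -> a = aone R.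
Proof.
move=> e; case: (ale_total a (aone R)) => h.
  apply: (ale_anti h); rewrite -e; exact: pow_le1.
apply: (ale_anti _ h); rewrite -e; exact: pow_ge1.
Qed.
End Aux.
Arguments apow {R}.
Arguments pow1 {R}.

Theorem lemma3p8 (K : finFieldType) (R : tot_aura) (v : K -> R) :
  mult_gen_seminorm v -> mult_equiv v (@triv_seminorm K).
Proof.
case=> v0 v1 _ _ vM.
have vX : forall x n, v (x ^+ n)%R = apow (v x) n.
  move=> x; elim=> [|n IH]; first by rewrite GRing.expr0 v1.
  by rewrite GRing.exprS vM IH.
have [p01 n01] := apos R.
have vnz : forall x : K, x != 0%R -> v x = aone R.
  move=> x nx.
  have vx0 : v x <> azero R.
    move=> e; apply: n01; rewrite -v1 -(GRing.mulfV nx) vM e amul0 //.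
  have [y hy] := ainv vx0.
  have gt := card_finNzRing_gt1 K.
  have := expf_card x; rewrite -(subnKC gt) => /(congr1 v).
  rewrite vX /= => e.
  apply: (@pow1 _ _ (#|K| - 2)).
  have : amul (amul (v x) (apow (v x) (#|K| - 2).+1)) y = amul (v x) y by rewrite e.
  rewrite hy -amulA (amulC _ y) amulA hy amul1 //.
have vval : forall x : K, v x = if x == 0%R then azero R else aone R.
  move=> x; case: eqP => [->|/eqP/vnz] //.
have n10 : ~ ale (aone R) (azero R).
  by move=> h; apply: n01; apply: ale_anti.
move=> a b c; rewrite /triv_seminorm !vval /=.
case: (a == 0%R); case: (b == 0%R); case: (c == 0%R) => /=;
  rewrite ?amul0 ?amul1; split=> //; try (move=> _; apply: ale_refl); try done.
all: try (move=> _; exact: p01).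
Qed.
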